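(* A graph is isomorphic to $KB(G)$ for some bipartite graph $G$ if and only if it is isomorphic to $H^2$ for some IIC-comparability graph $H$. That is, $KB(\text{bipartite})=(\text{IIC-comparability})^2$.
   Context: All graphs are finite and simple. A biclique of a graph $G$ is a set $P\subseteq V(G)$ such that the induced subgraph $G[P]$ is a complete bipartite graph with both parts nonempty, and $P$ is inclusion-maximal with this property. The biclique graph $KB(G)$ has the set of bicliques of $G$ as vertex set, two distinct bicliques being adjacent iff they intersect. For a graph $H$, the square $H^2$ has vertex set $V(H)$, two distinct vertices being adjacent iff their distance in $H$ is at most $2$. For a poset $\mathcal{P}=(C,\le)$ and $x\in C$, let $I^-_{\mathcal{P}}(x)=\{y\in C: y\le x\}$ and $I^+_{\mathcal{P}}(x)=\{y\in C: x\le y\}$; $\mathcal{P}$ is interval intersection closed (IIC) if for all $u,v\in C$: whenever $I^-_{\mathcal{P}}(u)\cap I^-_{\mathcal{P}}(v)\neq\emptyset$ there is $w\in C$ with $I^-_{\mathcal{P}}(w)=I^-_{\mathcal{P}}(u)\cap I^-_{\mathcal{P}}(v)$, and whenever $I^+_{\mathcal{P}}(u)\cap I^+_{\mathcal{P}}(v)\neq\emptyset$ there is $w\in C$ with $I^+_{\mathcal{P}}(w)=I^+_{\mathcal{P}}(u)\cap I^+_{\mathcal{P}}(v)$. The comparability graph of a poset $(C,\le)$ has vertex set $C$, two distinct elements adjacent iff they are comparable. A graph is IIC-comparability if it is the comparability graph of some (finite) IIC poset. *)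

(* Defs.v *)
From HB Require Import structures.
From mathcomp Require Import all_boot all_order.
Set Implicit Arguments. Unset Strict Implicit. Unset Printing Implicit Defensive.
Import Order.Theory.

Definition simple_graph (T : finType) (e : rel T) : Prop :=
  symmetric e /\ irreflexive e.

Definition graph_iso (T1 T2 : finType) (e1 : rel T1) (e2 : rel T2) : Prop :=
  exists f : T1 -> T2, bijective f /\ forall x y, e2 (f x) (f y) = e1 x y.

Definition bipartite (T : finType) (e : rel T) : Prop :=
  exists c : T -> bool, forall x y, e x y -> c x != c y.

Definition is_cbip (T : finType) (e : rel T) (P : {set T}) : bool :=
  [exists A : {set T}, exists B : {set T},
    [&& A :|: B == P, [disjoint A & B], A != set0, B != set0 &
       [forall x in P, forall y in P,
          e x y == ((x \in A) && (y \in B)) || ((x \in B) && (y \in A))]]].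

Definition biclique (T : finType) (e : rel T) (P : {set T}) : bool :=
  maxset (is_cbip e) P.

Definition KB_type (T : finType) (e : rel T) : finType :=
  {P : {set T} | biclique e P}.

Definition KB_rel (T : finType) (e : rel T) : rel (KB_type e) :=
  fun P Q => (val P != val Q) && (val P :&: val Q != set0).

Definition square (T : finType) (e : rel T) : rel T :=
  fun x y => (x != y) && (e x y || [exists z, e x z && e z y]).

Definition comp_rel (d : Order.disp_t) (C : porderType d) : rel C :=
  fun x y => (x != y) && (x >=< y)%O.

Definition IIC (d : Order.disp_t) (C : porderType d) : Prop :=
  forall u v : C,
    ((exists y : C, (y <= u)%O && (y <= v)%O) ->
       exists w : C, forall y : C, (y <= w)%O = (y <= u)%O && (y <= v)%O) /\
    ((exists y : C, (u <= y)%O && (v <= y)%O) ->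
       exists w : C, forall y : C, (w <= y)%O = (u <= y)%O && (v <= y)%O).

Arguments KB_rel {T} e.
Arguments square {T} e.
Arguments comp_rel {d} C.
Arguments is_cbip {T} e P.
Arguments biclique {T} e P.

(* Main.v *)
Require Import Defs.
From HB Require Import structures.
From mathcomp Require Import all_boot all_order.
Set Implicit Arguments. Unset Strict Implicit. Unset Printing Implicit Defensive.
Import Order.Theory.

Definition Xs (V : finType) (c : V -> bool) (b : bool) : {set V} := [set v | c v == b].
Definition leb (V : finType) (g : rel V) (c : V -> bool) (b : bool) (P Q : KB_type g) :=
  (val P :&: Xs c b \subset val Q :&: Xs c b) && (val Q :&: Xs c (~~ b) \subset val P :&: Xs c (~~ b)).

Definition KBo (V : finType) (g : rel V) (c : V -> bool) : Type := KB_type g.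
HB.instance Definition _ V g c := Finite.on (@KBo V g c).

Lemma leb_refl V g c : reflexive (@leb V g c true).
Proof. by move=> P; rewrite /leb !subxx. Qed.
Lemma leb_trans V g c b : transitive (@leb V g c b).
Proof.
move=> Q P R /andP[h1 h2] /andP[h3 h4]; apply/andP; split.
  exact: subset_trans h1 h3.
exact: subset_trans h4 h2.
Qed.
Lemma leb_anti V g c : antisymmetric (@leb V g c true).
Proof.
move=> P Q /andP[/andP[h1 h2] /andP[h3 h4]]; apply: val_inj; apply/setP => v.
have := subsetP h1 v; have := subsetP h3 v; have := subsetP h2 v; have := subsetP h4 v.
rewrite !inE; case: (c v) => /=; case: (v \in val P); case: (v \in val Q) => //=;
by move=> a b d f; first [by move: (a erefl)|by move: (b erefl)|by move: (d erefl)|by move: (f erefl)].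
Qed.

HB.instance Definition _ V g c := Order.Le_isPOrder.Build (Order.Disp tt tt) (@KBo V g c)
  (@leb_refl V g c) (@leb_anti V g c) (@leb_trans V g c true).

Lemma leE V g c (P Q : KBo g c) : (P <= Q)%O = @leb V g c true P Q.
Proof. by []. Qed.

Lemma nnb (a b : bool) : a != ~~ b -> a == b. Proof. by case: a; case: b. Qed.
Lemma nnb' (a b : bool) : ~~ b != a -> a == b. Proof. by case: a; case: b. Qed.

Section Bip.
Variables (V : finType) (g : rel V) (c : V -> bool).
Hypothesis gsym : symmetric g.
Hypothesis gc : forall x y, g x y -> c x != c y.

Definition N (S : {set V}) : {set V} := [set v | [forall x in S, g x v]].
Local Notation X := (Xs c).

Lemma inXs b v : (v \in X b) = (c v == b).
Proof. by rewrite inE. Qed.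

Lemma N_anti (S S' : {set V}) : S \subset S' -> N S' \subset N S.
Proof.
move=> h; apply/subsetP => v; rewrite !inE => /forallP H; apply/forallP => x.
by apply/implyP => xS; exact: (implyP (H x) (subsetP h x xS)).
Qed.

Lemma NNS (S : {set V}) : S \subset N (N S).
Proof.
apply/subsetP => x xS; rewrite inE; apply/forallP => y; apply/implyP.
by rewrite inE => /forallP/(_ x)/implyP/(_ xS); rewrite gsym.
Qed.

Lemma N_col b (S : {set V}) v : S :&: X b != set0 -> S \subset X b -> v \in N S -> c v = ~~ b.
Proof.
case/set0Pn => s; rewrite inE => /andP[sS sX] _; rewrite inE => /forallP/(_ s)/implyP/(_ sS).
by move/gc; move: sX; rewrite inXs => /eqP <-; case: (c v); case: (c s).
Qed.

Definition cross (Q : {set V}) := forall x y, x \in Q -> y \in Q -> c x != c y -> g x y.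

Lemma cbipP (Q : {set V}) : is_cbip g Q <-> (forall b, Q :&: X b != set0) /\ cross Q.
Proof.
split.
  case/existsP => A /existsP[B] /and5P[/eqP AB dAB A0 B0 /forallP H].
  have inQA a : a \in A -> a \in Q by rewrite -AB inE => ->.
  have inQB a : a \in B -> a \in Q by rewrite -AB inE => ->; rewrite orbT.
  have gAB a b : a \in A -> b \in B -> g a b.
    move=> aA bB; move: (H a) => /implyP/(_ (inQA a aA))/forallP/(_ b)/implyP/(_ (inQB b bB)).
    by rewrite aA bB /= => /eqP ->.
  have AnB x : x \in A -> x \in B -> False.
    by move=> xA xB; move: (disjointFr dAB xA); rewrite xB.
  case/set0Pn: A0 => a0 a0A; case/set0Pn: B0 => b0 b0B.
  have cA a : a \in A -> c a = c a0.
    move=> aA; move: (gc (gAB a b0 aA b0B)) (gc (gAB a0 b0 a0A b0B)).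
    by case: (c a); case: (c a0); case: (c b0).
  have cB b : b \in B -> c b = c b0.
    move=> bB; move: (gc (gAB a0 b a0A bB)) (gc (gAB a0 b0 a0A b0B)).
    by case: (c b); case: (c a0); case: (c b0).
  have cAB := gc (gAB a0 b0 a0A b0B).
  split.
    move=> b; case: (eqVneq (c a0) b) => [e|ne].
      by apply/set0Pn; exists a0; rewrite inE inQA //= inXs e.
    apply/set0Pn; exists b0; rewrite inE inQB //= inXs.
    by move: ne cAB; case: b; case: (c a0); case: (c b0).
  move=> x y xQ yQ cxy.
  move: (xQ) (yQ); rewrite -AB !inE => /orP[xA|xB] /orP[yA|yB].
  - by move: cxy; rewrite (cA x xA) (cA y yA) eqxx.
  - exact: gAB.
  - by rewrite gsym; apply: gAB.
  - by move: cxy; rewrite (cB x xB) (cB y yB) eqxx.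
case=> ne cr; apply/existsP; exists (Q :&: X true); apply/existsP; exists (Q :&: X false).
apply/and5P; split.
- apply/eqP/setP => v; rewrite !inE; case: (v \in Q) => //=; by case: (c v).
- rewrite -setI_eq0; apply/eqP/setP => v; rewrite !inE.
  by case: (v \in Q); case: (c v).
- exact: ne.
- exact: ne.
- apply/forallP => x; apply/implyP => xQ; apply/forallP => y; apply/implyP => yQ.
  rewrite !inE xQ yQ /=; apply/eqP.
  case: (boolP (c x != c y)) => [h|].
    rewrite (cr x y xQ yQ h); move: h; by case: (c x); case: (c y).
  rewrite negbK => /eqP h; case: (boolP (g x y)) => [/gc|_]; first by rewrite h eqxx.
  by rewrite h; case: (c y).
Qed.

Lemma inN (S : {set V}) v : (v \in N S) = [forall x in S, g x v].
Proof. by rewrite inE. Qed.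

Lemma bic_cbip P : biclique g P -> (forall b, P :&: X b != set0) /\ cross P.
Proof. by move/maxsetp/cbipP. Qed.

Lemma Lsuff (P : {set V}) : (forall b, P :&: X b != set0) -> cross P ->
  (forall b, N (P :&: X b) \subset P) -> biclique g P.
Proof.
move=> ne cr hN; apply/maxsetP; split; first exact/cbipP.
move=> Q /cbipP[neQ crQ] sPQ; apply/eqP; rewrite eqEsubset sPQ andbT.
apply/subsetP => v vQ; apply: (subsetP (hN (~~ c v))).
rewrite inE; apply/forallP => x; apply/implyP; rewrite !inE => /andP[xP /eqP cx].
apply: crQ => //; first exact: (subsetP sPQ).
by rewrite cx; case: (c v).
Qed.

Lemma L2 P b : biclique g P -> N (P :&: X b) \subset P.
Proof.
move=> bP; have [ne cr] := bic_cbip bP.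
have colN z : z \in N (P :&: X b) -> c z = ~~ b.
  apply: N_col; first by rewrite -setIA setIid; exact: ne.
  exact: subsetIr.
have cbQ : is_cbip g (P :|: N (P :&: X b)).
  apply/cbipP; split.
    move=> b'; apply: contraNneq (ne b') => e; apply/eqP/setP => v.
    by move/setP: e => /(_ v); rewrite !inE; case: (v \in P) => //=; case: (c v == b').
  move=> x y; rewrite !in_setU => /orP[xP|xN] /orP[yP|yN] cxy.
  - exact: cr.
  - by move: (yN); rewrite inN => /forallP/(_ x)/implyP; apply; rewrite !inE xP /=;
      move: cxy; rewrite (colN y yN); apply: nnb.
  - rewrite gsym; move: (xN); rewrite inN => /forallP/(_ y)/implyP; apply; rewrite !inE yP /=.
    by move: cxy; rewrite (colN x xN); apply: nnb'.
  - by move: cxy; rewrite (colN x xN) (colN y yN) eqxx.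
have := maxsetsup bP cbQ (subsetUl _ _) => e.
by rewrite -{2}e subsetUr.
Qed.

Lemma nbb (b : bool) : (~~ b == b) = false. Proof. by case: b. Qed.
Lemma bnb (b : bool) : (b == ~~ b) = false. Proof. by case: b. Qed.
Lemma nb (a b : bool) : a != b -> a = ~~ b. Proof. by case: a; case: b. Qed.

Lemma Gmeet b (u v : KB_type g) : val u :&: val v :&: X b != set0 ->
  exists R : KB_type g, forall y : KB_type g,
    leb c b y R = leb c b y u && leb c b y v.
Proof.
move=> Sne; set S := val u :&: val v :&: X b.
have Sb : S \subset X b by exact: subsetIr.
have SX : S :&: X b != set0 by rewrite -setIA setIid.
set RN := N S; set RB := N RN.
have colRN z : z \in RN -> c z = ~~ b by apply: N_col SX Sb.
have key (w : KB_type g) : S \subset val w ->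
    (val w :&: X (~~ b) \subset RN) /\ (RB \subset val w :&: X b).
  move=> Sw; have [_ crw] := bic_cbip (valP w).
  have h1 : val w :&: X (~~ b) \subset RN.
    apply/subsetP => y; rewrite !inE => /andP[yw cy]; apply/forallP => x; apply/implyP => xS.
    have xw := subsetP Sw x xS; have := subsetP Sb x xS; rewrite inE => /eqP cx.
    by apply: crw => //; rewrite cx (eqP cy); case: (b).
  split=> //.
  have colRB z : z \in RB -> c z = b.
    move=> zR; rewrite -[b]negbK; apply: (N_col (b := ~~ b)) zR.
      have [ne _] := bic_cbip (valP w); apply: contraNneq (ne (~~ b)) => e.
      by apply/eqP; apply/eqP; rewrite -subset0 -e; apply/subsetP => y yw;
         rewrite inE (subsetP h1 y yw) /=; move: yw; rewrite !inE => /andP[_].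
    by apply/subsetP => z' /colRN; rewrite inE => ->.
  apply/subsetP => z zR; rewrite !inE (colRB z zR) eqxx andbT.
  apply: (subsetP (L2 (~~ b) (valP w))); exact: (subsetP (N_anti h1)).
have Su : S \subset val u by apply/subsetP => x; rewrite !inE => /andP[/andP[->]].
have Sv : S \subset val v by apply/subsetP => x; rewrite !inE => /andP[/andP[_ ->]].
have [uN RBu] := key u Su; have [vN RBv] := key v Sv.
have SRB : S \subset RB := NNS S.
have colRB z : z \in RB -> c z = b.
  by move/(subsetP RBu); rewrite !inE => /andP[_ /eqP].
have RNne : RN != set0.
  have [une _] := bic_cbip (valP u); case/set0Pn: (une (~~ b)) => y yu.
  by apply/set0Pn; exists y; exact: (subsetP uN).
set R := RB :|: RN.
have RXb : R :&: X b = RB.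
  apply/setP => z; rewrite in_setI in_setU inXs.
  case: (boolP (z \in RB)) => [zB|_] /=; first by rewrite colRB ?eqxx.
  case: (boolP (z \in RN)) => [zN|] /=; last by [].
  by rewrite colRN // nbb.
have RXnb : R :&: X (~~ b) = RN.
  apply/setP => z; rewrite in_setI in_setU inXs.
  case: (boolP (z \in RB)) => [zB|_] /=.
    rewrite colRB // bnb; apply/esym/negbTE/negP => /colRN; rewrite (colRB z zB) => h.
    by move: (bnb b); rewrite -h eqxx.
  case: (boolP (z \in RN)) => [zN|] /=; last by [].
  by rewrite colRN // eqxx.
have bicR : biclique g R.
  apply: Lsuff.
  - move=> b'; case: (eqVneq b' b) => [->|/nb ->]; [rewrite RXb | by rewrite RXnb].
    case/set0Pn: Sne => s0 sS; apply/set0Pn; exists s0; exact: (subsetP SRB).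
  - move=> x y; rewrite !in_setU => /orP[xB|xN] /orP[yB|yN] cxy.
    + by move: cxy; rewrite (colRB x xB) (colRB y yB) eqxx.
    + by rewrite gsym; move: xB; rewrite /RB inN => /forallP/(_ y)/implyP; apply.
    + by move: yB; rewrite /RB inN => /forallP/(_ x)/implyP; apply.
    + by move: cxy; rewrite (colRN x xN) (colRN y yN) eqxx.
  - move=> b'; case: (eqVneq b' b) => [->|/nb ->]; rewrite ?RXb ?RXnb.
      exact: subset_trans (N_anti SRB) (subsetUr _ _).
    exact: subsetUl.
exists (exist _ R bicR) => y; rewrite /leb /= RXb RXnb.
apply/idP/idP.
  case/andP => h1 h2.
  by rewrite (subset_trans h1 RBu) (subset_trans uN h2) (subset_trans h1 RBv) (subset_trans vN h2).
case/andP => /andP[h1 h2] /andP[h3 h4].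
have hyS : val y :&: X b \subset S.
  apply/subsetP => z zy; move: (subsetP h1 z zy) (subsetP h3 z zy).
  by rewrite !inE => /andP[-> ->] /andP[->].
rewrite (subset_trans hyS SRB) /=.
apply/subsetP => z zN; rewrite !inE (colRN z zN) eqxx andbT.
exact: (subsetP (L2 b (valP y)) z (subsetP (N_anti hyS) z zN)).
Qed.

Lemma leb_reflb b (P : KB_type g) : leb c b P P.
Proof. by rewrite /leb !subxx. Qed.

Lemma lebF (P Q : KB_type g) : leb c false P Q = leb c true Q P.
Proof. by rewrite /leb /= andbC. Qed.

Lemma meet_ne b (R P Q : KB_type g) : leb c b R P -> leb c b R Q ->
  val P :&: val Q :&: X b != set0.
Proof.
case/andP => h1 _ /andP[h2 _]; have [ne _] := bic_cbip (valP R).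
case/set0Pn: (ne b) => r rR; apply/set0Pn; exists r.
move: (subsetP h1 r rR) (subsetP h2 r rR); rewrite !inE.
by case/andP => -> -> /andP[-> _].
Qed.

Lemma ne_weak (A B : {set V}) b : A :&: B :&: X b != set0 -> A :&: B != set0.
Proof. by case/set0Pn => r; rewrite inE => /andP[h _]; apply/set0Pn; exists r. Qed.

Lemma dir1_IIC : IIC (KBo g c).
Proof.
move=> u v; split.
  case=> y /andP[yu yv].
  have [R HR] := Gmeet (meet_ne yu yv).
  by exists R => y'; rewrite !leE HR.
case=> y /andP[uy vy].
have h1 : leb c false y u by rewrite lebF.
have h2 : leb c false y v by rewrite lebF.
have [R HR] := Gmeet (meet_ne h1 h2).
by exists R => y'; rewrite !leE -!lebF HR.
Qed.

Lemma dir1_sq (P Q : KBo g c) : KB_rel g P Q = square (comp_rel (KBo g c)) P Q.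
Proof.
rewrite /KB_rel /square /comp_rel; case: (eqVneq P Q) => [->|nPQ]; first by rewrite eqxx.
have -> : (val P != val Q) = true by rewrite val_eqE nPQ.
rewrite /=; apply/idP/idP.
  case/set0Pn => x; rewrite inE => /andP[xP xQ].
  have hx : val P :&: val Q :&: X (c x) != set0.
    by apply/set0Pn; exists x; rewrite !inE xP xQ eqxx.
  have [R HR] := Gmeet hx.
  have := HR R; rewrite leb_reflb => /esym/andP[RP RQ].
  case cx: (c x) RP RQ => RP RQ.
    rewrite -leE in RP; rewrite -leE in RQ.
    case: (eqVneq R P) => [eRP|nRP]; first by rewrite -eRP le_comparable.
    case: (eqVneq R Q) => [eRQ|nRQ]; first by rewrite -eRQ ge_comparable.
    apply/orP; right; apply/existsP; exists R.
    by rewrite eq_sym nRP nRQ ge_comparable // le_comparable.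
  rewrite lebF -leE in RP; rewrite lebF -leE in RQ.
  case: (eqVneq R P) => [eRP|nRP]; first by rewrite -eRP ge_comparable.
  case: (eqVneq R Q) => [eRQ|nRQ]; first by rewrite -eRQ le_comparable.
  apply/orP; right; apply/existsP; exists R.
  by rewrite eq_sym nRP nRQ le_comparable // ge_comparable.
have low (R : KBo g c) : (R <= P)%O -> (R <= Q)%O -> val P :&: val Q != set0.
  by rewrite !leE => h1 h2; apply: ne_weak (meet_ne h1 h2).
have up (R : KBo g c) : (P <= R)%O -> (Q <= R)%O -> val P :&: val Q != set0.
  rewrite !leE -!lebF => h1 h2; apply: ne_weak (meet_ne h1 h2).
case/orP => [|/existsP[z /andP[/andP[_ cPz] /andP[_ czQ]]]].
  by rewrite /Order.comparable => /orP[h|h]; [apply: (low P) | apply: (low Q)].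
move: cPz czQ; rewrite /Order.comparable => /orP[h1|h1] /orP[h2|h2].
- by apply: (low P) => //; apply: Order.POrderTheory.le_trans h1 h2.
- exact: (up z).
- exact: (low z).
- by apply: (low Q) => //; apply: Order.POrderTheory.le_trans h2 h1.
Qed.
End Bip.

Section Dir2.
Variables (d : Order.disp_t) (C : finPOrderType d).
Hypothesis iic : IIC C.
Local Open Scope order_scope.

Definition gs : rel (C + C)%type := fun x y =>
  match x, y with inl a, inr b => a <= b | inr b, inl a => a <= b | _, _ => false end.
Definition cs (v : (C + C)%type) : bool := if v is inl _ then true else false.

Lemma gs_sym : symmetric gs. Proof. by move=> [a|a] [b|b]. Qed.
Lemma gs_c x y : gs x y -> cs x != cs y. Proof. by case: x; case: y. Qed.
Lemma gs_irr : irreflexive gs. Proof. by move=> [a|a]. Qed.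

Definition phi (w : C) : {set (C + C)%type} :=
  [set v | match v with inl a => a <= w | inr b => w <= b end].

Lemma phi_bic w : biclique gs (phi w).
Proof.
apply: (Lsuff gs_sym gs_c).
- by move=> [|]; apply/set0Pn; [exists (inl w) | exists (inr w)]; rewrite !inE /= lexx.
- move=> [a|a] [b|b]; rewrite !inE //= => h1 h2 _.
    exact: le_trans h1 h2.
  exact: le_trans h2 h1.
- move=> [|]; apply/subsetP => v.
    rewrite inN => /forallP/(_ (inl w)); rewrite !inE /= lexx /=.
    by case: v.
  rewrite inN => /forallP/(_ (inr w)); rewrite !inE /= lexx /=.
  by case: v.
Qed.

Lemma phi_inj : injective phi.
Proof.
move=> u v e; apply: le_anti; apply/andP; split.
  by move: (e) => /setP/(_ (inl u)); rewrite !inE lexx => <-.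
by move: (e) => /setP/(_ (inl v)); rewrite !inE lexx => ->.
Qed.

Lemma iic_fold (s : seq C) (a : C) : s != [::] -> all (fun b => a <= b) s ->
  exists w, forall y, (y <= w) = all (fun b => y <= b) s.
Proof.
elim: s => [//|x s IH] _ /= /andP[ax as_].
case: s IH as_ => [|x' s'] IH as_.
  by exists x => y; rewrite andbT.
have [w' Hw'] := IH isT as_.
have [H1 _] := iic x w'.
have [w Hw] : exists w, forall y, (y <= w) = (y <= x) && (y <= w').
  by apply: H1; exists a; rewrite ax Hw' as_.
by exists w => y; rewrite Hw Hw'.
Qed.

Lemma phi_surj (P : KB_type gs) : exists w, phi w = val P.
Proof.
have [ne cr] := bic_cbip gs_sym gs_c (valP P).
have crossP a b : inl a \in val P -> inr b \in val P -> a <= b.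
  by move=> ha hb; exact: (cr (inl a) (inr b) ha hb isT).
have [a0 a0P] : exists a0, inl a0 \in val P.
  case/set0Pn: (ne true) => -[a|b]; rewrite !inE => /andP[h1 h2] //.
  by exists a.
have [b0 b0P] : exists b0, inr b0 \in val P.
  case/set0Pn: (ne false) => -[a|b]; rewrite !inE => /andP[h1 h2] //.
  by exists b.
set B := [set b | inr b \in val P].
have sne : enum B != [::].
  have : b0 \in enum B by rewrite mem_enum inE.
  by case: (enum B).
have sall : all (fun b => a0 <= b) (enum B).
  by apply/allP => b; rewrite mem_enum inE => hb; exact: crossP.
have [w Hw] := iic_fold sne sall.
have HwP y : (y <= w) <-> (forall b, inr b \in val P -> y <= b).
  rewrite Hw; split.
    by move/allP => h b hb; apply: h; rewrite mem_enum inE.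
  by move=> h; apply/allP => b; rewrite mem_enum inE; exact: h.
exists w; apply/setP => -[y|z]; rewrite inE.
  apply/idP/idP.
    move/HwP => h; apply: (subsetP (L2 gs_sym gs_c false (valP P))).
    rewrite inN; apply/forallP => -[a|b]; apply/implyP; rewrite !inE /= ?andbF ?andbT //.
    exact: h.
  by move=> hy; apply/HwP => b hb; exact: crossP.
apply/idP/idP.
  move=> wz; apply: (subsetP (L2 gs_sym gs_c true (valP P))).
  rewrite inN; apply/forallP => -[a|b]; apply/implyP; rewrite !inE /= ?andbF ?andbT //.
  move=> ha; apply: le_trans wz.
  by apply/HwP => b hb; exact: crossP.
by move=> hz; have /HwP := lexx w; apply.
Qed.

Definition Phi (w : C) : KB_type gs := exist _ (phi w) (phi_bic w).

Lemma Phi_bij : bijective Phi.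
Proof.
have surjP (P : KB_type gs) : exists w, Phi w == P.
  by have [w e] := phi_surj P; exists w; apply/eqP/val_inj.
exists (fun P => xchoose (surjP P)).
  move=> w; apply: phi_inj; move: (xchooseP (surjP (Phi w))).
  by move/eqP/(congr1 val).
by move=> P; exact/eqP/(xchooseP (surjP P)).
Qed.

Lemma Phi_rel u v : KB_rel gs (Phi u) (Phi v) = square (comp_rel C) u v.
Proof.
rewrite /KB_rel /square /comp_rel /=; case: (eqVneq u v) => [->|nuv]; first by rewrite eqxx.
rewrite (inj_eq phi_inj) nuv /=.
have low a : a <= u -> a <= v -> phi u :&: phi v != set0.
  by move=> h1 h2; apply/set0Pn; exists (inl a); rewrite !inE h1 h2.
have up b : u <= b -> v <= b -> phi u :&: phi v != set0.
  by move=> h1 h2; apply/set0Pn; exists (inr b); rewrite !inE h1 h2.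
apply/idP/idP.
  case/set0Pn => -[a|b]; rewrite !inE /= => /andP[h1 h2].
    case: (eqVneq a u) => [eau|nau]; first by rewrite -eau le_comparable.
    case: (eqVneq a v) => [eav|nav]; first by rewrite -eav ge_comparable.
    apply/orP; right; apply/existsP; exists a.
    by rewrite eq_sym nau nav ge_comparable // le_comparable.
  case: (eqVneq b u) => [ebu|nbu]; first by rewrite -ebu ge_comparable.
  case: (eqVneq b v) => [ebv|nbv]; first by rewrite -ebv le_comparable.
  apply/orP; right; apply/existsP; exists b.
  by rewrite eq_sym nbu nbv le_comparable // ge_comparable.
case/orP => [|/existsP[z /andP[/andP[_ cPz] /andP[_ czQ]]]].
  by rewrite /Order.comparable => /orP[h|h]; [apply: (low u) | apply: (low v)].
move: cPz czQ; rewrite /Order.comparable => /orP[h1|h1] /orP[h2|h2].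
- by apply: (low u) => //; apply: le_trans h1 h2.
- exact: (up z).
- exact: (low z).
- by apply: (low v) => //; apply: le_trans h2 h1.
Qed.
End Dir2.

Theorem corollary6 (T : finType) (e : rel T) (He : simple_graph e) :
  (exists (V : finType) (g : rel V),
      simple_graph g /\ bipartite g /\ graph_iso e (KB_rel g)) <->
  (exists (d : Order.disp_t) (C : finPOrderType d),
      IIC C /\ graph_iso e (square (comp_rel C))).
Proof.
split.
  case=> V [g [[gsym girr] [[c hc] [f [fbij fe]]]]].
  exists (Order.Disp tt tt), (KBo g c); split; first exact: dir1_IIC gsym hc.
  exists (f : T -> KBo g c); split => // x y.
  by rewrite -(dir1_sq gsym hc) fe.
case=> d [C [iic [f [fbij fe]]]].
exists (C + C)%type, (@gs d C); split; first by split; [exact: gs_sym | exact: gs_irr].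
split; first by exists (@cs d C); exact: gs_c.
exists (Phi (C := C) \o f); split; first exact: bij_comp (Phi_bij iic) fbij.
by move=> x y; rewrite /= Phi_rel fe.
Qed.
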